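(* Let $a,b\colon\mathbb N\to\mathbb Z\setminus\{0\}$ be two injective sequences. Then there exist a probability space $(X,\mathcal X,\mu)$ and measure preserving transformations $T,S\colon X\to X$, both Bernoulli, such that (i) for some $f,g\in L^\infty(\mu)$ the averages $\frac1N\sum_{n=1}^N\int f\circ T^{a(n)}\cdot g\circ S^{b(n)}\,d\mu$ diverge as $N\to\infty$; and (ii) for some $A\in\mathcal X$ with $\mu(A)>0$ one has $\mu(T^{-a(n)}A\cap S^{-b(n)}A)=0$ for every $n\in\mathbb N$.
   Context: A measure preserving transformation $T$ of $(X,\mathcal X,\mu)$ is called Bernoulli if $(X,\mathcal X,\mu,T)$ is isomorphic to a (two-sided) Bernoulli shift on finitely many symbols; in particular it is invertible, so negative powers make sense. *)

(* Defs.v *)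
From HB Require Import structures.
From mathcomp Require Import all_boot all_order all_algebra.
From mathcomp Require Import all_classical all_reals all_analysis.
Set Implicit Arguments. Unset Strict Implicit. Unset Printing Implicit Defensive.
Import Order.TTheory GRing.Theory Num.Theory.
Local Open Scope classical_set_scope.
Local Open Scope ring_scope.

Definition iterz {X : Type} (T Tinv : X -> X) (z : int) : X -> X :=
  match z with
  | Posz n => iter n T
  | Negz n => iter n.+1 Tinv
  end.

Definition invertible_mpt {d} {X : measurableType d} {R : realType}
  (mu : set X -> \bar R) (T Tinv : X -> X) : Prop :=
  [/\ measurable_fun setT T, measurable_fun setT Tinv,
      cancel T Tinv, cancel Tinv T &
      forall A : set X, measurable A -> mu (T @^-1` A) = mu A].

(* 'I_k.+1 is pointed (by ord0), needed for the generated sigma-algebra. *)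
HB.instance Definition _ (k : nat) := isPointed.Build 'I_k.+1 ord0.

(* The two-sided full shift on the k.+1 symbols 'I_k.+1:
   the space int -> 'I_k.+1 with the product sigma-algebra, i.e. the one
   generated by the coordinate sets {z | z j = s}. *)
Definition shift_coords (k : nat) : set (set (int -> 'I_k.+1)) :=
  fun A => exists (j : int) (s : 'I_k.+1), A = [set z | z j = s].

Arguments shift_coords k : clear implicits.

Notation shift_space k := (g_sigma_algebraType (shift_coords k)).

Definition shift_map (k : nat) (z : shift_space k) : shift_space k :=
  fun j => z (j + 1)%R.
Arguments shift_map k z : clear implicits.

(* nu is the Bernoulli (product) measure with probability vector p:
   the measure of every cylinder is the product of the probabilities.
   (A measure on the product sigma-algebra is determined by these values.) *)
Definition bernoulli_measure {R : realType} (k : nat) (p : 'I_k.+1 -> R)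
  (nu : set (shift_space k) -> \bar R) : Prop :=
  forall (m : nat) (n0 : int) (w : 'I_m -> 'I_k.+1),
    nu [set z : shift_space k | forall i : 'I_m, z (n0 + (i : nat)%:Z)%R = w i]
    = (\prod_(i < m) p (w i))%:E.

(* (X, mu, T) is Bernoulli: isomorphic (mod 0) to a two-sided Bernoulli shift
   on finitely many symbols with a positive probability vector p. *)
Definition is_bernoulli {d} {X : measurableType d} {R : realType}
  (mu : {measure set X -> \bar R}) (T : X -> X) : Prop :=
  exists (k : nat) (p : 'I_k.+1 -> R)
         (nu : {measure set (shift_space k) -> \bar R})
         (phi : X -> shift_space k) (psi : shift_space k -> X),
    [/\ (forall i, 0 < p i) /\ \sum_(i < k.+1) p i = 1,
        bernoulli_measure p nu,
        measurable_fun setT phi /\ measurable_fun setT psi,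
        (forall B : set (shift_space k), measurable B ->
           mu (phi @^-1` B) = nu B) &
        [/\ {ae mu, forall x, psi (phi x) = x},
             {ae nu, forall z, phi (psi z) = z} &
             {ae mu, forall x, phi (T x) = shift_map k (phi x)}]].

(* Essentially bounded measurable functions (bounded representatives of
   L^infty classes). *)
Definition Linfty_fun {d} {X : measurableType d} {R : realType}
  (f : X -> R) : Prop :=
  measurable_fun setT f /\ exists M : R, forall x, `|f x| <= M.

(* Main.v *)
Require Import Defs.
From HB Require Import structures.
From mathcomp Require Import all_boot all_order all_algebra.
From mathcomp Require Import all_classical all_reals all_analysis.
From mathcomp Require Import zify lra.
Set Implicit Arguments. Unset Strict Implicit. Unset Printing Implicit Defensive.

Definition bits (N m k : nat) : bool := odd (m %/ 2 ^ (N - k.+1)).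

Lemma sum_split2 (F : nat -> nat) n :
  \sum_(0 <= m < n.*2) F m = \sum_(0 <= m < n) (F m.*2 + F m.*2.+1).
Proof.
elim: n => [|n IH]; first by rewrite !big_geq.
rewrite doubleS !big_nat_recr //= ?IH ?addnA //; lia.
Qed.

Lemma bitsS N m r k : (r < 2)%N -> (k <= N)%N ->
  bits N.+1 (r + m.*2) k = if (k < N)%N then bits N m k else odd r.
Proof.
move=> r2 kN; rewrite /bits subSS.
case: ltnP => kN'.
  have -> : (N - k = (N - k.+1).+1)%N by lia.
  rewrite expnS divnMA -muln2 (divnDMl _ _ (isT : (0 < 2)%N)) (divn_small r2).
  by rewrite add0n.
have -> : k = N by apply/eqP; rewrite eqn_leq kN kN'.
by rewrite subnn expn0 divn1 oddD odd_double addbF.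
Qed.

Definition cnt (N : nat) (Q : nat -> bool -> bool) : nat :=
  \sum_(0 <= m < 2 ^ N) all (fun k => Q k (bits N m k)) (iota 0 N).

Lemma cntE N Q : cnt N Q = \prod_(0 <= k < N) (Q k false + Q k true).
Proof.
elim: N Q => [|N IH] Q.
  by rewrite /cnt expn0 big_nat1 big_geq.
rewrite big_nat_recr //= -IH /cnt expnS mul2n sum_split2 big_distrl.
apply: eq_bigr => m _.
have E r : (r < 2)%N -> all (fun k => Q k (bits N.+1 (r + m.*2) k)) (iota 0 N.+1)
   = all (fun k => Q k (bits N m k)) (iota 0 N) && Q N (odd r).
  move=> r2; have -> : iota 0 N.+1 = iota 0 N ++ [:: N] by rewrite -addn1 iotaD.
  rewrite all_cat /= andbT.
  rewrite (@bitsS N m r N r2 (leqnn N)) ltnn; congr andb.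
  apply/eq_in_all => k; rewrite mem_iota /= add0n => kN.
  by rewrite (@bitsS N m r k r2 (ltnW kN)) kN.
have := E 0%N isT; rewrite add0n => ->.
have := E 1%N isT; rewrite add1n => ->.
by case: (all _ _); case: (Q N false); case: (Q N true).
Qed.

Definition satL (L : seq (nat * bool)) (f : nat -> bool) :=
  all (fun p => f p.1 == p.2) L.
Definition QL (L : seq (nat * bool)) (k : nat) (b : bool) :=
  all (fun p => (p.1 == k) ==> (b == p.2)) L.

Lemma satL_iota N L f : all (fun p => p.1 < N) L ->
  satL L f = all (fun k => QL L k (f k)) (iota 0 N).
Proof.
move=> LN; apply/allP/allP.
  move=> h k _; apply/allP => p pL; apply/implyP => /eqP <-.
  exact: h.
move=> h p pL; have : p.1 \in iota 0 N by rewrite mem_iota /=; move/allP: LN => /(_ p pL).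
move=> /h /allP /(_ p pL); by rewrite eqxx.
Qed.

Lemma QL_notin L k b : k \notin map fst L -> QL L k b.
Proof.
elim: L => [|p L IH] //=; rewrite inE negb_or => /andP[kp kL].
by rewrite IH // andbT; apply/implyP => /eqP pk; move: kp; rewrite pk eqxx.
Qed.

Lemma QL_sum L k : uniq (map fst L) ->
  (QL L k false + QL L k true = if k \in map fst L then 1 else 2)%N.
Proof.
elim: L => [|p L IH] //= /andP[pL uL]; rewrite inE.
case: (eqVneq p.1 k) => [pk|kp] /=.
  rewrite -pk !QL_notin //.
  by case: p.2.
by rewrite IH // (negbTE kp).
Qed.

Lemma prod_keys N (K : seq nat) : uniq K -> all (fun k => k < N) K ->
  (\prod_(0 <= k < N) (if k \in K then 1 else 2) = 2 ^ (N - size K))%N.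
Proof.
move=> uK KN.
have E : forall N, (\prod_(0 <= k < N) (if k \in K then 1 else 2) =
           2 ^ count (fun k => k \notin K) (iota 0 N))%N.
  elim => [|n IH]; first by rewrite big_geq.
  rewrite big_nat_recr // IH.
  have -> : iota 0 n.+1 = iota 0 n ++ [:: n] by rewrite -[n.+1]addn1 iotaD.
  rewrite count_cat expnD /=.
  by case: (n \in K).
rewrite E; congr (2 ^ _).
have h := count_predC (mem K) (iota 0 N); rewrite size_iota in h.
have h2 : count (fun k => k \notin K) (iota 0 N) = count (predC (mem K)) (iota 0 N) by [].
suff c1 : count (mem K) (iota 0 N) = size K by rewrite h2; lia.
rewrite -size_filter; apply/perm_size/uniq_perm => //.
  by rewrite filter_uniq // iota_uniq.
move=> x; rewrite mem_filter mem_iota /= add0n.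
by apply/andP/idP => [[]//|xK]; split => //; move/allP: KN => /(_ x xK).
Qed.

Import Order.TTheory GRing.Theory Num.Theory Num.Def numFieldNormedType.Exports.
Local Open Scope classical_set_scope.
Local Open Scope ring_scope.

Definition coords : set (set (nat -> bool)) :=
  fun A => exists (k : nat) (b : bool), A = [set x | x k = b].
Notation Om := (g_sigma_algebraType coords).

Lemma mcoord k b : measurable ([set x : Om | x k = b]).
Proof. by apply: sub_sigma_algebra; exists k, b. Qed.

Definition CylL (L : seq (nat * bool)) : set Om :=
  [set x | all (fun p => x p.1 == p.2) L].

Lemma CylL_cons p L : CylL (p :: L) = [set x : Om | x p.1 = p.2] `&` CylL L.
Proof.
apply/seteqP; split => x; rewrite /CylL /=.
  by move=> /andP[/eqP -> ->].
by move=> [-> ->]; rewrite eqxx.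
Qed.

Lemma mCylL L : measurable (CylL L).
Proof.
elim: L => [|p L IH].
  have -> : CylL [::] = setT by apply/seteqP; split.
  exact: measurableT.
by rewrite CylL_cons; apply: measurableI => //; exact: mcoord.
Qed.

Lemma measurable_Om d (T : measurableType d) (f : T -> Om) :
  (forall k b, measurable (f @^-1` [set x | x k = b])) -> measurable_fun setT f.
Proof.
move=> hf.
apply: (@measurability _ _ T Om setT f coords) => //.
by move=> _ [_ [k [b ->]] <-]; rewrite setTI; exact: hf.
Qed.

Section Digits.
Variable R : realType.

Definition Dg (u : R) : Om := fun k => odd (truncn (u * 2 ^+ k.+1)).

Lemma truncn_eqS (x : R) n : (truncn x = n.+1)%N <-> x \in `[n.+1%:R, n.+2%:R[.
Proof.
rewrite in_itv /=; case: (leP 0 x) => x0.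
  by rewrite -truncn_eq //; split => [->|/eqP].
split=> [h|/andP[h _]].
  have : (0 < truncn x)%N by rewrite h.
  by rewrite truncn_gt0 => h1; have := le_lt_trans h1 x0; rewrite ltr10.
by have := le_lt_trans h x0; rewrite ltNge ler0n.
Qed.

Lemma truncn_eq0' (x : R) : (truncn x = 0)%N <-> x \in `]-oo, 1[.
Proof.
rewrite in_itv /=; split => [/truncn0Pn|h]; first by rewrite ltNge.
by apply/truncn0Pn; rewrite -ltNge.
Qed.

Lemma mtrunc (P : pred nat) : measurable [set x : R | P (truncn x)].
Proof.
have -> : [set x : R | P (truncn x)] =
   \bigcup_n (if P n then [set x : R | truncn x = n] else set0).
  apply/seteqP; split => x /=.
    by move=> Px; exists (truncn x) => //; rewrite Px.
  by move=> [n _]; case: ifPn => // Pn /= ->.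
apply: bigcupT_measurable => -[|n]; case: ifPn => // _.
  have -> : [set x : R | truncn x = 0%N] = `]-oo, 1[%classic.
    by apply/seteqP; split => x /=; rewrite truncn_eq0'.
  exact: measurable_itv.
have -> : [set x : R | truncn x = n.+1] = `[n.+1%:R, n.+2%:R[%classic.
  by apply/seteqP; split => x /=; rewrite truncn_eqS.
exact: measurable_itv.
Qed.

Lemma mDg : measurable_fun setT Dg.
Proof.
apply: measurable_Om => k b.
have -> : Dg @^-1` [set x | x k = b] =
  ( *%R^~ (2 ^+ k.+1)) @^-1` [set x : R | odd (truncn x) == b].
  by apply/seteqP; split => x /=; rewrite /Dg => /eqP.
rewrite -[X in measurable X]setTI.
have := (@measurable_realfun.mulrr_measurable R setT (2 ^+ k.+1) measurableT _ (mtrunc (fun n => odd n == b))).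
exact.
Qed.

Notation LR := (g_sigma_algebraType (R.-ocitv.-measurable)).
Definition DgL : LR -> Om := Dg.
Lemma mDgL : measurable_fun setT DgL.
Proof. exact: mDg. Qed.
HB.instance Definition _ := isMeasurableFun.Build _ _ _ _ DgL mDgL.

Definition U := uniform_prob (@ltr01 R).
Definition mu := distribution U DgL.


Lemma U_eq (A : set LR) : measurable A ->
  U A = lebesgue_measure (A `&` `[0%R, 1%R[).
Proof.
move=> mA; rewrite /U /uniform_prob integral_uniform_pdf.
have m01 : measurable (A `&` `[0%R, 1%R]) by apply: measurableI => //; exact: measurable_itv.
rewrite (eq_integral (cst 1%E)); last first.
  move=> x; rewrite inE /= => -[_]; rewrite in_itv /= /uniform_pdf => ->.
  by rewrite subr0 invr1.
rewrite integral_cst // mul1e.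
have -> : A `&` `[0%R, 1%R] = (A `&` `[0%R, 1%R[) `|` (A `&` [set 1%R]).
  apply/seteqP; split => x /=.
    move=> [Ax]; rewrite !in_itv /= => /andP[x0 x1].
    case: (ltP x 1) => h; [left; split => //; exact/andP|right; split => //].
    by apply/eqP; rewrite eq_le x1 h.
  move=> [[Ax]|[Ax /= e]]; rewrite !in_itv /=.
    by move=> /andP[-> /ltW ->].
  by subst x; split => //; rewrite ler01 lexx.
rewrite measureU //.
- rewrite (_ : _ (A `&` [set 1%R]) = 0%E) ?adde0 //.
  apply/eqP; rewrite eq_le measure_ge0 andbT.
  rewrite -(lebesgue_measure_set1 (1%R : R)).
  by apply: le_measure => //; rewrite inE //; apply: measurableI.
- by apply: measurableI => //; exact: measurable_itv.
- by apply: measurableI.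
- apply/seteqP; split => x //= [[_]]; rewrite in_itv /= => /andP[_ h] [_ e].
  by move: h; rewrite e ltxx.
Qed.

Lemma truncn_div (x : R) (d : nat) : 0 <= x -> (0 < d)%N ->
  truncn (x / d%:R) = (truncn x %/ d)%N.
Proof.
move=> x0 d0; have dR : (0 : R) < d%:R by rewrite ltr0n.
apply: truncn_def; apply/andP; split.
  have tx : (truncn x)%:R <= x by rewrite truncn_le.
  rewrite ler_pdivlMr // -natrM (le_trans _ tx) //.
  by rewrite ler_nat leq_trunc_div.
rewrite ltr_pdivrMr // -natrM (lt_le_trans (truncnS_gt x)) //.
by rewrite ler_nat ltn_ceil.
Qed.

Lemma Dg_bits (u : R) N k : 0 <= u -> (k < N)%N ->
  Dg u k = bits N (truncn (u * 2 ^+ N)) k.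
Proof.
move=> u0 kN; rewrite /Dg /bits -truncn_div ?expn_gt0 //; last first.
  by rewrite mulr_ge0 // exprn_ge0.
congr (odd (truncn _)).
have -> : (N = k.+1 + (N - k.+1))%N by rewrite subnKC.
rewrite exprD natrX mulrA addKn mulfK // expf_neq0 //.
Qed.

Definition Itv N m : set R := `[m%:R / 2 ^+ N, m.+1%:R / 2 ^+ N[%classic.

Lemma Itv_truncn N m (u : R) : Itv N m u <-> 0 <= u /\ truncn (u * 2 ^+ N) = m.
Proof.
have p2 : (0 : R) < 2 ^+ N by rewrite exprn_gt0.
rewrite /Itv /= in_itv /= ler_pdivrMr // ltr_pdivlMr //.
split.
  move=> /andP[h1 h2]; have u0 : 0 <= u.
    by rewrite -(pmulr_lge0 _ p2) (le_trans _ h1).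
  split => //; apply/eqP; rewrite truncn_eq ?h1 ?h2 //.
  exact: mulr_ge0 u0 (ltW p2).
move=> [u0 /eqP]; rewrite truncn_eq //.
exact: mulr_ge0 u0 (ltW p2).
Qed.
Definition cntL N L := (\sum_(m < 2 ^ N) (satL L (bits N m) : nat))%N.

Lemma mItv N m : measurable (Itv N m).
Proof. exact: measurable_itv. Qed.

Lemma mu_cylN N L : all (fun p => (p.1 < N)%N) L ->
  mu (CylL L) = ((cntL N L)%:R / 2 ^+ N)%:E.
Proof.
move=> LN.
have p2 : (0 : R) < 2 ^+ N by rewrite exprn_gt0.
have mP : measurable (DgL @^-1` CylL L).
  by rewrite -[X in measurable X]setTI; apply: mDgL => //; exact: mCylL.
rewrite /mu /distribution /pushforward.
transitivity (lebesgue_measure (DgL @^-1` CylL L `&` `[0%R, 1%R[)); first exact: U_eq mP.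
have -> : DgL @^-1` CylL L `&` `[0%R, 1%R[ =
    \big[setU/set0]_(m < 2 ^ N | satL L (bits N m)) Itv N m.
  rewrite -bigcup_seq_cond; apply/seteqP; split => u /=.
    move=> [Lu]; rewrite in_itv /= => /andP[u0 u1].
    have mN : (truncn (u * 2 ^+ N) < 2 ^ N)%N.
      rewrite truncn_lt_nat ?mulr_ge0 ?(ltW p2) // natrX.
      by rewrite gtr_pMl // ltr0n expn_gt0.
    exists (Ordinal mN); last by apply/Itv_truncn.
    rewrite /= mem_index_enum /=; apply/allP => p pL.
    move/allP: Lu => /(_ p pL) /=; rewrite /DgL.
    by rewrite (@Dg_bits u N) //; move/allP: LN => /(_ p pL).
  move=> [m /= /andP[_ Lm] /Itv_truncn [u0 um]]; split; last first.
    rewrite in_itv /= u0 /=.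
    have := ltn_ord m; rewrite -um truncn_lt_nat ?mulr_ge0 ?(ltW p2) // natrX.
    by rewrite gtr_pMl // ltr0n expn_gt0.
  apply/allP => p pL; move/allP: Lm => /(_ p pL).
  by rewrite /DgL (@Dg_bits u N) ?um //; move/allP: LN => /(_ p pL).
have tI : trivIset [set: 'I_(2 ^ N)] (fun i : 'I_(2 ^ N) => Itv N i).
  apply/trivIsetP => i j _ _ ij; apply/seteqP; split => // u /= [].
  move=> /Itv_truncn [_ ei] /Itv_truncn [_ ej].
  by move: ij; rewrite -(inj_eq val_inj) /= -ei -ej eqxx.
rewrite measure_bigsetU_ord //; last by move=> i; exact: mItv.
have Il m : lebesgue_measure (Itv N m) = (2 ^+ N)^-1%:E.
  rewrite /Itv lebesgue_measure_itv /= lte_fin ltr_pM2r ?invr_gt0 //.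
  by rewrite ltr_nat ltnSn -EFinD -mulrBl -natrB // subSnn mul1r.
transitivity (\sum_(i < 2 ^ N | satL L (bits N i)) (((2 : R) ^+ N)^-1)%:E)%E.
  by apply: eq_bigr => i _; exact: Il.
rewrite sumEFin sumr_const /cntL; congr EFin.
have -> : (\sum_(m < 2 ^ N) (satL L (bits N m) : nat))%N =
    #|[pred i : 'I_(2 ^ N) | satL L (bits N i)]|.
  rewrite -sum1_card [RHS]big_mkcond /=; apply: eq_bigr => i _.
  by rewrite inE; case: (satL _ _).
by rewrite [RHS]mulrC mulr_natr.
Qed.
Lemma cntL_eq N L : all (fun p => (p.1 < N)%N) L -> uniq (map fst L) ->
  cntL N L = (2 ^ (N - size L))%N.
Proof.
move=> LN uL; rewrite /cntL -(big_mkord xpredT (fun m => (satL L (bits N m) : nat))).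
rewrite (eq_bigr (fun m => (all (fun k => QL L k (bits N m k)) (iota 0 N) : nat))); last first.
  by move=> m _; rewrite (satL_iota _ LN).
rewrite -/(cnt N (QL L)) cntE.
rewrite (eq_bigr (fun k => if k \in map fst L then 1 else 2)%N); last first.
  by move=> k _; rewrite QL_sum.
rewrite prod_keys ?size_map //.
by apply/allP => k /mapP [p pL ->]; move/allP: LN => /(_ p pL).
Qed.

Lemma bound_keys (L : seq (nat * bool)) : exists N, all (fun p => (p.1 < N)%N) L.
Proof.
elim: L => [|p L [N hN]]; first by exists 0%N.
exists (maxn p.1.+1 N); rewrite /= leq_max ltnSn /=.
by apply/allP => q qL; rewrite leq_max; move/allP: hN => /(_ q qL) ->; rewrite orbT.
Qed.

Lemma mu_cyl L : uniq (map fst L) -> mu (CylL L) = ((2 ^+ size L)^-1 : R)%:E.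
Proof.
move=> uL; have [N0 hN0] := bound_keys L.
set N := (N0 + size L)%N.
have LN : all (fun p => (p.1 < N)%N) L.
  by apply/allP => p pL; move/allP: hN0 => /(_ p pL) h; rewrite /N ltn_addr.
rewrite (mu_cylN LN) (cntL_eq LN uL); congr EFin.
have -> : N = (size L + (N - size L))%N by rewrite subnKC // /N leq_addl.
by rewrite addKn exprD natrX invfM mulrC -mulrA mulVf ?mulr1.
Qed.
End Digits.

Definition Gc : set (set Om) :=
  [set A | exists L, uniq (map fst L) /\ A = CylL L] `|` [set set0].

Lemma Gc_coord A k b : Gc A -> Gc (A `&` [set x : Om | x k = b]).
Proof.
case=> [[L [uL ->]]|->]; last by right; rewrite set0I.
case kL: (k \in map fst L).
  move/mapP: kL => [q qL kq].
  case: (eqVneq q.2 b) => [qb|qb].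
    left; exists L; split => //; apply/seteqP; split => x; first by case.
    move=> Lx; split => //; move/allP: Lx => /(_ q qL) /eqP.
    by rewrite -kq -qb.
  right; apply/seteqP; split => // x [/allP /(_ q qL) /eqP xq xk].
  by move: qb; rewrite -xq -kq xk eqxx.
left; exists ((k, b) :: L); split; first by rewrite /= kL.
by rewrite CylL_cons setIC.
Qed.

Lemma Gc_setI : setI_closed Gc.
Proof.
move=> A B GA [[L' [_ ->]]|->]; last by right; rewrite setI0.
elim: L' A GA => [|p L IH] A GA.
  have -> : CylL [::] = setT by apply/seteqP; split.
  by rewrite setIT.
rewrite CylL_cons setIA; apply: IH; exact: Gc_coord.
Qed.

Lemma Gc_gen : @measurable _ Om = <<s Gc >>.
Proof.
apply/seteqP; split.
  apply: smallest_sub; first exact: smallest_sigma_algebra.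
  move=> _ [k [b ->]]; apply: sub_sigma_algebra; left; exists [:: (k, b)]; split => //.
  rewrite CylL_cons; apply/seteqP; split => x /=.
    by move=> ->; split => //; rewrite /CylL.
  by case.
apply: smallest_sub; first exact: sigma_algebra_measurable.
by move=> _ [[L [_ ->]]|->]; [exact: mCylL|exact: measurable0].
Qed.

Definition CM (pi : nat -> nat) (fl : nat -> bool) (x : Om) : Om :=
  fun k => x (pi k) (+) fl k.

Lemma mCM pi fl : measurable_fun setT (CM pi fl).
Proof.
apply: measurable_Om => k b.
have -> : CM pi fl @^-1` [set x | x k = b] = [set x : Om | x (pi k) = b (+) fl k].
  apply/seteqP; split => x /=; rewrite /CM.
    by move=> <-; rewrite -addbA addbb addbF.
  by move=> ->; rewrite -addbA addbb addbF.
exact: mcoord.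
Qed.

HB.instance Definition _ pi fl := isMeasurableFun.Build _ _ _ _ (CM pi fl) (mCM pi fl).

Lemma CM_CylL pi fl L : CM pi fl @^-1` CylL L =
  CylL (map (fun p => (pi p.1, p.2 (+) fl p.1)) L).
Proof.
rewrite /CylL /CM /=; apply/seteqP; split => x /=; rewrite all_map;
  (have E : forall p : nat * bool, ((x (pi p.1) (+) fl p.1) == p.2) =
     (x (pi p.1) == p.2 (+) fl p.1) by move=> p; case: (x _); case: (fl _); case: p.2);
  by rewrite (eq_all E).
Qed.

Section MP.
Variable R : realType.

Lemma Gc_setT : Gc setT.
Proof.
by left; exists [::]; split => //; apply/seteqP; split.
Qed.

Lemma CM_mp pi fl : injective pi ->
  forall A : set Om, measurable A -> mu R (CM pi fl @^-1` A) = mu R A.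
Proof.
move=> ipi A mA.
have := (@measure_unique _ R Om Gc (fun _ => setT) Gc_gen Gc_setI (fun _ => Gc_setT)).
move=> /(_ _ (distribution (mu R) (CM pi fl)) (mu R)).
apply => //.
- by rewrite bigcup_const.
- move=> B [[L [uL ->]]|->]; last by rewrite !measure0.
  transitivity (mu R (CM pi fl @^-1` CylL L)); first by [].
  rewrite CM_CylL mu_cyl ?size_map; first by symmetry; exact: mu_cyl.
  have -> : [seq i.1 | i <- [seq (pi p.1, p.2 (+) fl p.1) | p <- L]] =
     map pi (map fst L) by rewrite -!map_comp.
  by rewrite map_inj_uniq.
- move=> _; have h := probability_setT (distribution (mu R) (CM pi fl)).
  by rewrite [X in (X < _)%E]h ltry.
Qed.

End MP.

Definition zig (j : int) : nat := match j with Posz n => n.*2 | Negz n => n.*2.+1 end.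
Definition unzig (n : nat) : int := if odd n then Negz n./2 else Posz n./2.

Lemma zigK : cancel zig unzig.
Proof.
case=> n /=; rewrite /unzig /=.
  by rewrite odd_double doubleK.
rewrite odd_double /=; congr Negz; exact: uphalf_double.
Qed.

Lemma unzigK : cancel unzig zig.
Proof.
move=> n; rewrite /unzig; have := odd_double_half n.
case: (odd n) => /= e; first by rewrite -[RHS]e.
by rewrite -[RHS]e add0n.
Qed.

Definition enc (j : int) (r : nat) : nat := (4 * zig j + r)%N.
Definition dj (k : nat) : int := unzig (k %/ 4).
Definition dr (k : nat) : nat := (k %% 4)%N.

Lemma dr_lt k : (dr k < 4)%N.
Proof. by rewrite /dr ltn_pmod. Qed.

Lemma dj_enc j r : (r < 4)%N -> dj (enc j r) = j.
Proof.
by move=> r4; rewrite /dj /enc mulnC divnMDl // divn_small // addn0 zigK.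
Qed.

Lemma dr_enc j r : (r < 4)%N -> dr (enc j r) = r.
Proof. by move=> r4; rewrite /dr /enc mulnC modnMDl modn_small. Qed.

Lemma enc_d k : enc (dj k) (dr k) = k.
Proof. by rewrite /enc /dj /dr unzigK mulnC -divn_eq. Qed.

Lemma enc_inj j r j' r' : (r < 4)%N -> (r' < 4)%N -> enc j r = enc j' r' -> j = j' /\ r = r'.
Proof.
move=> r4 r4' e; split.
  by rewrite -(dj_enc j r4) e dj_enc.
by rewrite -(dr_enc j r4) e dr_enc.
Qed.

Definition piT (z : int) (k : nat) : nat := enc (dj k + z) (dr k).

Lemma piT_comp z z' k : piT z (piT z' k) = piT (z' + z) k.
Proof.
by rewrite /piT dj_enc ?dr_lt // dr_enc ?dr_lt // addrA.
Qed.

Lemma piT0 k : piT 0 k = k.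
Proof. by rewrite /piT addr0 enc_d. Qed.

Definition Tm : Om -> Om := CM (piT 1) (fun _ => false).
Definition Tmi : Om -> Om := CM (piT (-1)) (fun _ => false).

Lemma iterz_T (z : int) (x : Om) : iterz Tm Tmi z x = fun k => x (piT z k).
Proof.
apply/funext => k; case: z => n /=.
  elim: n k => [|n IH] k; first by rewrite piT0.
  rewrite iterS /Tm /CM addbF IH piT_comp; congr (x (piT _ k)).
elim: n k => [|n IH] k.
  by rewrite /= /Tmi /CM addbF.
rewrite {1}/Tmi /CM addbF iterS -/Tmi IH piT_comp; congr (x (piT _ k)).

Qed.

Lemma piT_inj z : injective (piT z).
Proof.
move=> k k' e; have := congr1 (piT (- z)) e.
by rewrite !piT_comp subrr !piT0.
Qed.


Section Inv.
Variable f : nat -> int.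
Hypothesis finj : {in [pred n : nat | (0 < n)%N] &, injective f}.

Definition finv (j : int) : option nat :=
  match pselect (exists n, (0 < n)%N && (f n == j)) with
  | left h => Some (ex_minn h)
  | right _ => None
  end.

Lemma finv_some j n : finv j = Some n -> (0 < n)%N /\ f n = j.
Proof.
rewrite /finv; case: pselect => // h [<-].
by case: ex_minnP => m /andP[m0 /eqP fm] _.
Qed.

Lemma finv_f n : (0 < n)%N -> finv (f n) = Some n.
Proof.
move=> n0; case E: (finv (f n)) => [m|].
  by have [m0 fm] := finv_some E; rewrite (finj m0 n0 fm).
move: E; rewrite /finv; case: pselect => // -[].
by exists n; rewrite n0 eqxx.
Qed.

Lemma finv_none j : finv j = None -> forall n, (0 < n)%N -> f n != j.
Proof.
rewrite /finv; case: pselect => // h _ n n0; apply/eqP => e; apply: h.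
by exists n; rewrite n0 e eqxx.
Qed.

End Inv.

Definition tauG (p q : nat -> int) (pinv qinv : int -> option nat) (k : nat) : nat :=
  let j := dj k in let r := dr k in
  if ~~ odd r then (match qinv j with Some n => enc (p n) r | None => enc j r.+1 end)
  else (match pinv j with Some n => enc (q n) r | None => enc j r.-1 end).

Lemma tauGK (p q : nat -> int) (pinv qinv : int -> option nat) :
  (forall j n, pinv j = Some n -> (0 < n)%N /\ p n = j) ->
  (forall j n, qinv j = Some n -> (0 < n)%N /\ q n = j) ->
  (forall n, (0 < n)%N -> pinv (p n) = Some n) ->
  (forall n, (0 < n)%N -> qinv (q n) = Some n) ->
  cancel (tauG p q pinv qinv) (tauG q p qinv pinv).
Proof.
move=> Hp Hq Hpf Hqf k.
have r4 := dr_lt k.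
rewrite {2}/tauG /=; case: ifPn => [ev|od].
  have r3 : (dr k < 3)%N by move: r4 ev; case: (dr k) => [|[|[|[|]]]].
  case E: (qinv (dj k)) => [n|].
    have [n0 qn] := Hq _ _ E.
    rewrite /tauG dj_enc // dr_enc // ev Hpf // qn enc_d //.
  rewrite /tauG dj_enc ?dr_enc //= ev /= E enc_d //.
rewrite negbK in od.
have r0 : (0 < dr k)%N by move: od; case: (dr k).
case E: (pinv (dj k)) => [n|].
  have [n0 pn] := Hp _ _ E.
  rewrite /tauG dj_enc // dr_enc // od Hqf // pn enc_d //.
have r1 : ((dr k).-1 < 4)%N by rewrite (leq_ltn_trans (leq_pred _)).
rewrite /tauG dj_enc // dr_enc //.
have -> : ~~ odd (dr k).-1 by move: od r0; case: (dr k).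
by rewrite E prednK // enc_d.
Qed.

Section Construction.
Variables (a b : nat -> int).
Hypothesis ha_inj : {in [pred n : nat | (0 < n)%N] &, injective a}.
Hypothesis hb_inj : {in [pred n : nat | (0 < n)%N] &, injective b}.
Hypothesis hb0 : forall n : nat, (0 < n)%N -> b n != 0.

Definition tau := tauG a b (finv a) (finv b).
Definition taui := tauG b a (finv b) (finv a).

Lemma tauK : cancel tau taui.
Proof.
apply: tauGK; [exact: finv_some|exact: finv_some|exact: finv_f|exact: finv_f].
Qed.

Lemma tauiK : cancel taui tau.
Proof.
apply: tauGK; [exact: finv_some|exact: finv_some|exact: finv_f|exact: finv_f].
Qed.

Definition eps (n : nat) : bool := odd (trunc_log 2 n.-1).

Definition cf (k : nat) : bool :=
  match finv b (dj k) with
  | Some n => if dr k == 0%N then eps n else dr k == 2%N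
  | None => false
  end.

Definition Psi : Om -> Om := CM tau cf.
Definition Psii : Om -> Om := CM taui (fun k => cf (taui k)).

Lemma PsiK : cancel Psi Psii.
Proof.
move=> x; apply/funext => k; rewrite /Psii /Psi /CM tauiK -addbA addbb addbF //.
Qed.

Lemma PsiiK : cancel Psii Psi.
Proof.
move=> x; apply/funext => k; rewrite /Psii /Psi /CM tauK -addbA addbb addbF //.
Qed.

Definition Sm (x : Om) : Om := Psii (Tm (Psi x)).
Definition Smi (x : Om) : Om := Psii (Tmi (Psi x)).

Lemma iterz_S z x : iterz Sm Smi z x = Psii (iterz Tm Tmi z (Psi x)).
Proof.
case: z => n /=.
  elim: n => [|n IH]; first by rewrite /= PsiK.
  by rewrite iterS IH /Sm PsiiK.
elim: n => [|n IH]; first by [].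
by rewrite iterS IH /Smi PsiiK.
Qed.

Lemma binv0 : finv b 0 = None.
Proof.
case E: (finv b 0) => [n|] //.
by have [n0 bn] := finv_some E; move: (hb0 n0); rewrite bn eqxx.
Qed.

Lemma T_coord z r x : (r < 4)%N -> iterz Tm Tmi z x (enc 0 r) = x (enc z r).
Proof.
by move=> r4; rewrite iterz_T /piT dj_enc // dr_enc // add0r.
Qed.

Lemma S_coord1 n x : (0 < n)%N ->
  iterz Sm Smi (b n) x (enc 0 1) = x (enc (a n) 0) (+) eps n.
Proof.
move=> n0; rewrite iterz_S {1}/Psii /CM.
have -> : taui (enc 0 1) = enc 0 0.
  by rewrite /taui /tauG dj_enc // dr_enc //= binv0.
have -> : cf (enc 0 0) = false by rewrite /cf dj_enc // binv0.
rewrite addbF T_coord // /Psi /CM.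
have -> : tau (enc (b n) 0) = enc (a n) 0.
  by rewrite /tau /tauG dj_enc // dr_enc //= finv_f.
by rewrite /cf dj_enc // dr_enc // finv_f.
Qed.

Lemma S_coord3 n x : (0 < n)%N ->
  iterz Sm Smi (b n) x (enc 0 3) = ~~ x (enc (a n) 2).
Proof.
move=> n0; rewrite iterz_S {1}/Psii /CM.
have -> : taui (enc 0 3) = enc 0 2.
  by rewrite /taui /tauG dj_enc // dr_enc //= binv0.
have -> : cf (enc 0 2) = false by rewrite /cf dj_enc // binv0.
rewrite addbF T_coord // /Psi /CM.
have -> : tau (enc (b n) 2) = enc (a n) 2.
  by rewrite /tau /tauG dj_enc // dr_enc //= finv_f.
by rewrite /cf dj_enc // dr_enc // finv_f // addbT.
Qed.

End Construction.

Definition enc4 (b0 b1 b2 b3 : bool) : 'I_16 :=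
  inord (b0 + 2 * b1 + 4 * b2 + 8 * b3)%N.
Definition bit16 (i : 'I_16) (r : nat) : bool := odd (i %/ 2 ^ r)%N.

Lemma bit_enc4 b0 b1 b2 b3 :
  [/\ bit16 (enc4 b0 b1 b2 b3) 0 = b0, bit16 (enc4 b0 b1 b2 b3) 1 = b1,
      bit16 (enc4 b0 b1 b2 b3) 2 = b2 & bit16 (enc4 b0 b1 b2 b3) 3 = b3].
Proof.
rewrite /bit16 /enc4 inordK; last by case: b0; case: b1; case: b2; case: b3.
by case: b0; case: b1; case: b2; case: b3.
Qed.

Lemma arith16 (m : nat) : (m < 16)%N ->
  (odd (m %/ 2 ^ 0) + 2 * odd (m %/ 2 ^ 1) + 4 * odd (m %/ 2 ^ 2) + 8 * odd (m %/ 2 ^ 3) = m)%N.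
Proof.
move=> lt; do 16 (case: m lt => [//|m] lt).
by [].
Qed.

Lemma enc4_bit (i : 'I_16) :
  enc4 (bit16 i 0) (bit16 i 1) (bit16 i 2) (bit16 i 3) = i.
Proof.
apply: val_inj; case: i => m lt /=.
rewrite /enc4 /bit16 /= inordK; last by rewrite arith16.
exact: arith16.
Qed.

Notation SS := (shift_space 15).

Definition phi (x : Om) : SS :=
  fun j => enc4 (x (enc j 0)) (x (enc j 1)) (x (enc j 2)) (x (enc j 3)).
Definition psi (z : SS) : Om := fun k => bit16 (z (dj k)) (dr k).

Lemma psi_phi x : psi (phi x) = x.
Proof.
apply/funext => k; rewrite /psi /phi -[in RHS](enc_d k).
have [h0 h1 h2 h3] := bit_enc4 (x (enc (dj k) 0)) (x (enc (dj k) 1))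
  (x (enc (dj k) 2)) (x (enc (dj k) 3)).
by have := dr_lt k; case: (dr k) => [|[|[|[|r]]]].
Qed.

Lemma phi_psi z : phi (psi z) = z.
Proof.
by apply/funext => j; rewrite /phi /psi !dj_enc // !dr_enc // enc4_bit.
Qed.

Lemma phi_T x : phi (Tm x) = shift_map 15 (phi x).
Proof.
by apply/funext => j; rewrite /phi /shift_map /Tm /CM !addbF /piT !dj_enc // !dr_enc.
Qed.

Lemma mSS j s : measurable [set z : SS | z j = s].
Proof. by apply: sub_sigma_algebra; exists j, s. Qed.

Lemma measurable_SS d (T : measurableType d) (f : T -> SS) :
  (forall j s, measurable (f @^-1` [set z | z j = s])) -> measurable_fun setT f.
Proof.
move=> hf; apply: (@measurability _ _ T SS setT f (shift_coords 15)) => //.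
by move=> _ [_ [j [s ->]] <-]; rewrite setTI; exact: hf.
Qed.

Lemma enc4_eq b0 b1 b2 b3 s :
  (enc4 b0 b1 b2 b3 = s) <->
  [/\ b0 = bit16 s 0, b1 = bit16 s 1, b2 = bit16 s 2 & b3 = bit16 s 3].
Proof.
split.
  by move=> <-; have [-> -> -> ->] := bit_enc4 b0 b1 b2 b3.
by move=> [-> -> -> ->]; rewrite enc4_bit.
Qed.

Lemma mphi : measurable_fun setT phi.
Proof.
apply: measurable_SS => j s.
have -> : phi @^-1` [set z | z j = s] =
   CylL [:: (enc j 0, bit16 s 0); (enc j 1, bit16 s 1); (enc j 2, bit16 s 2);
            (enc j 3, bit16 s 3)].
  apply/seteqP; split => x; rewrite /CylL /phi /=.
    by move/enc4_eq => [-> -> -> ->]; rewrite !eqxx.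
  by move=> /and5P[/eqP h0 /eqP h1 /eqP h2 /eqP h3 _]; apply/enc4_eq.
exact: mCylL.
Qed.

Lemma mpsi : measurable_fun setT psi.
Proof.
apply: measurable_Om => k b.
have -> : psi @^-1` [set x | x k = b] =
  \bigcup_(i : nat) (if (i < 16)%N && (bit16 (inord i) (dr k) == b)
                    then [set z : SS | z (dj k) = inord i] else set0).
  apply/seteqP; split => z; rewrite /psi /=.
    move=> e; exists (val (z (dj k))) => //.
    by rewrite ltn_ord inord_val e eqxx.
  by move=> [i _]; case: ifPn => // /andP[_ /eqP <-] /= ->.
apply: bigcupT_measurable => i; case: ifPn => // _; exact: mSS.
Qed.

HB.instance Definition _ := isMeasurableFun.Build _ _ _ _ phi mphi.

Section Bern.
Variable R : realType.

Definition Lw m (n0 : int) (w : 'I_m -> 'I_16) : seq (nat * bool) :=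
  [seq (enc (n0 + (nat_of_ord i)%:Z) r, bit16 (w i) r) | i <- enum 'I_m, r <- iota 0 4].

Lemma phi_cyl m (n0 : int) (w : 'I_m -> 'I_16) :
  phi @^-1` [set z : SS | forall i : 'I_m, z (n0 + (i : nat)%:Z)%R = w i] =
  CylL (Lw n0 w).
Proof.
apply/seteqP; split => x /=.
  move=> h; apply/allP => p /allpairsP [[i r] [/= iin rin ->]] /=.
  have /enc4_eq [e0 e1 e2 e3] := h i.
  by move: rin; rewrite !inE => /or4P [] /eqP ->; apply/eqP.
move=> /allP h i; apply/enc4_eq.
have H r : (r < 4)%N -> x (enc (n0 + (i : nat)%:Z) r) = bit16 (w i) r.
  move=> r4; apply/eqP; apply: (h (enc (n0 + (i : nat)%:Z) r, bit16 (w i) r)).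
  apply: (allpairs_f (fun (i : 'I_m) r => (enc (n0 + (nat_of_ord i)%:Z) r, bit16 (w i) r))).
    by rewrite mem_enum.
  by rewrite mem_iota.
by split; apply: H.
Qed.

Lemma Lw_uniq m (n0 : int) (w : 'I_m -> 'I_16) : uniq (map fst (Lw n0 w)).
Proof.
rewrite /Lw map_allpairs.
apply: (@allpairs_uniq _ _ _ (fun (i : 'I_m) r => enc (n0 + (nat_of_ord i)%:Z) r));
  [exact: enum_uniq|exact: iota_uniq|].
have mr : forall (i : 'I_m) r,
    (i, r) \in [seq (x, y) | x <- enum 'I_m, y <- iota 0 4] -> (r < 4)%N.
  move=> i0 r0 /allpairsP [[a c] [_ ci]] [_ ->].
  by rewrite mem_iota in ci.
move=> [i r] [i' r'] ir ir' /= e.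
have [e1 e2] := enc_inj (mr _ _ ir) (mr _ _ ir') e.
move/addrI: e1 => /eqP; rewrite eqz_nat => /eqP /val_inj ->.
by rewrite e2.
Qed.

Lemma nu_cyl m (n0 : int) (w : 'I_m -> 'I_16) :
  distribution (mu R) phi [set z : SS | forall i : 'I_m, z (n0 + (i : nat)%:Z)%R = w i]
  = (\prod_(i < m) (16%:R^-1 : R))%:E.
Proof.
transitivity (mu R (phi @^-1` [set z : SS | forall i : 'I_m, z (n0 + (i : nat)%:Z)%R = w i])).
  by [].
rewrite phi_cyl mu_cyl ?Lw_uniq //; congr EFin.
rewrite /Lw size_allpairs size_enum_ord size_iota prodr_const card_ord.
by rewrite exprVn mulnC exprM -natrX.
Qed.

End Bern.

Section Div.
Variable R : realType.

Definition sg (n : nat) : R := if eps n then -1 else 1.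
Definition Ssum (N : nat) : R := \sum_(1 <= n < N.+1) sg n.
Definition uu (N : nat) : R := N%:R^-1 * Ssum N.

Lemma eps_block m n : (2 ^ m < n <= 2 ^ m.+1)%N -> eps n = odd m.
Proof.
move=> /andP[h1 h2]; rewrite /eps (@trunc_log_eq 2 m) //.
by apply/andP; split; lia.
Qed.

Lemma block m : Ssum (2 ^ m.+1) - Ssum (2 ^ m) = (2 ^ m)%:R * (if odd m then -1 else 1).
Proof.
rewrite /Ssum (big_cat_nat _ (n := (2 ^ m).+1)) //=; last by rewrite ltnS leq_pexp2l.
rewrite addrC addrK.
rewrite (eq_big_nat _ _ (F2 := fun=> if odd m then -1 else 1)); last first.
  by move=> n /andP[h1 h2]; rewrite /sg (@eps_block m n) //; apply/andP; split; lia.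
rewrite sumr_const_nat mulr_natl; congr (_ *+ _).
rewrite expnS; lia.
Qed.

Lemma uu_rel m : 2 * uu (2 ^ m.+1) - uu (2 ^ m) = (if odd m then -1 else 1).
Proof.
have p : (0 : R) < (2 ^ m)%:R by rewrite ltr0n expn_gt0.
have h := block m.
rewrite /uu expnS natrM mulrA invfM mulrA mulfV ?mul1r //.
apply: (mulfI (lt0r_neq0 p)); rewrite mulrBr !mulrA mulfV ?mul1r ?(lt0r_neq0 p) //.
by rewrite -expnS.
Qed.

Lemma not_cvg_uu : ~ cvgn uu.
Proof.
move=> /cvg_ex [l hl].
have e0 : (0 : R) < 4^-1 by rewrite invr_gt0.
have := (cvgrPdist_lt _ _).1 hl _ e0 => -[N0 _ hN0].
have big k : (N0 <= 2 ^ (N0 + k))%N.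
  by apply: (leq_trans (ltnW (ltn_expl _ (isT : (1 < 2)%N)))); rewrite leq_pexp2l // leq_addr.
have h0 := hN0 _ (big 0%N); have h1 := hN0 _ (big 1%N); have h2 := hN0 _ (big 2%N).
have r0 := uu_rel (N0 + 0); have r1 := uu_rel (N0 + 1).
rewrite -!addnS in r0 r1.
move: h0 h1 h2 r0 r1 => /=; rewrite !ltr_distl.
rewrite !addnS addn0 /=.
set a := uu _; set b := uu _; set c := uu _.
move=> /andP[h0 h0'] /andP[h1 h1'] /andP[h2 h2'].
case: (odd N0) => /= r0 r1; lra.
Qed.

End Div.

Lemma mpre d1 d2 (T1 : measurableType d1) (T2 : measurableType d2) (f : T1 -> T2)
  (A : set T2) : measurable_fun setT f -> measurable A -> measurable (f @^-1` A).
Proof. by move=> mf mA; rewrite -[X in measurable X]setTI; exact: mf. Qed.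

Section Final.
Variable R : realType.
Variables (a b : nat -> int).
Hypothesis ha_inj : {in [pred n : nat | (0 < n)%N] &, injective a}.
Hypothesis hb_inj : {in [pred n : nat | (0 < n)%N] &, injective b}.
Hypothesis hb0 : forall n : nat, (0 < n)%N -> b n != 0.

Lemma TK : cancel Tm Tmi.
Proof.
by move=> x; apply/funext => k; rewrite /Tmi /Tm /CM !addbF piT_comp subrr piT0.
Qed.

Lemma TiK : cancel Tmi Tm.
Proof.
by move=> x; apply/funext => k; rewrite /Tmi /Tm /CM !addbF piT_comp addrN piT0.
Qed.

Lemma mTm : measurable_fun setT Tm. Proof. exact: mCM. Qed.
Lemma mTmi : measurable_fun setT Tmi. Proof. exact: mCM. Qed.
Lemma mPsi : measurable_fun setT (Psi a b). Proof. exact: mCM. Qed.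
Lemma mPsii : measurable_fun setT (Psii a b). Proof. exact: mCM. Qed.

Lemma Tm_mp A : measurable A -> mu R (Tm @^-1` A) = mu R A.
Proof. by move=> mA; apply: CM_mp => //; exact: piT_inj. Qed.
Lemma Tmi_mp A : measurable A -> mu R (Tmi @^-1` A) = mu R A.
Proof. by move=> mA; apply: CM_mp => //; exact: piT_inj. Qed.
Lemma Psi_mp A : measurable A -> mu R (Psi a b @^-1` A) = mu R A.
Proof. by move=> mA; apply: CM_mp => //; apply: (can_inj (tauK ha_inj hb_inj)). Qed.
Lemma Psii_mp A : measurable A -> mu R (Psii a b @^-1` A) = mu R A.
Proof. by move=> mA; apply: CM_mp => //; apply: (can_inj (tauiK ha_inj hb_inj)). Qed.

Lemma inv_T : invertible_mpt (mu R) Tm Tmi.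
Proof. by split; [exact: mTm|exact: mTmi|exact: TK|exact: TiK|exact: Tm_mp]. Qed.

Lemma mSm : measurable_fun setT (Sm a b).
Proof.
apply: (measurableT_comp (f := Psii a b) (g := Tm \o Psi a b)); first exact: mPsii.
by apply: measurableT_comp; [exact: mTm|exact: mPsi].
Qed.

Lemma mSmi : measurable_fun setT (Smi a b).
Proof.
apply: (measurableT_comp (f := Psii a b) (g := Tmi \o Psi a b)); first exact: mPsii.
by apply: measurableT_comp; [exact: mTmi|exact: mPsi].
Qed.

Lemma inv_S : invertible_mpt (mu R) (Sm a b) (Smi a b).
Proof.
split; [exact: mSm|exact: mSmi| | |].
- by move=> x; rewrite /Smi /Sm (PsiiK ha_inj hb_inj) TK (PsiK ha_inj hb_inj).
- by move=> x; rewrite /Smi /Sm (PsiiK ha_inj hb_inj) TiK (PsiK ha_inj hb_inj).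
- move=> A mA.
  have -> : Sm a b @^-1` A = Psi a b @^-1` (Tm @^-1` (Psii a b @^-1` A)) by [].
  rewrite Psi_mp ?Tm_mp ?Psii_mp //; first exact: mpre mPsii mA.
  by apply: mpre mTm _; exact: mpre mPsii mA.
Qed.

Definition pp : 'I_16 -> R := fun _ => 16%:R^-1.

Lemma pp_ok : (forall i, 0 < pp i) /\ \sum_(i < 16) pp i = 1.
Proof.
split => [i|]; first by rewrite /pp invr_gt0 ltr0n.
rewrite /pp sumr_const card_ord -(mulr_natr (16%:R^-1 : R)).
by rewrite mulVf // pnatr_eq0.
Qed.

Lemma bern_T : is_bernoulli (mu R) Tm.
Proof.
exists 15%N, pp, (distribution (mu R) phi), phi, psi; split.
- exact: pp_ok.
- by move=> m n0 w; exact: nu_cyl.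
- by split; [exact: mphi|exact: mpsi].
- by [].
- by split; apply: aeW => x; [exact: psi_phi|exact: phi_psi|exact: phi_T].
Qed.

Lemma bern_S : is_bernoulli (mu R) (Sm a b).
Proof.
exists 15%N, pp, (distribution (mu R) phi), (phi \o Psi a b), (Psii a b \o psi); split.
- exact: pp_ok.
- by move=> m n0 w; exact: nu_cyl.
- split; first by apply: measurableT_comp; [exact: mphi|exact: mPsi].
  by apply: measurableT_comp; [exact: mPsii|exact: mpsi].
- move=> B mB; rewrite comp_preimage.
  transitivity (mu R (phi @^-1` B)); last by [].
  exact: Psi_mp (mpre mphi mB).
- split; apply: aeW => x /=.
  + by rewrite psi_phi (PsiK ha_inj hb_inj).
  + by rewrite (PsiiK ha_inj hb_inj) phi_psi.
  + by rewrite /Sm (PsiiK ha_inj hb_inj) phi_T.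
Qed.

End Final.

Lemma mconst (P : Prop) : measurable [set _ : Om | P].
Proof.
case: (pselect P) => h.
  by have -> : [set _ : Om | P] = setT by apply/seteqP; split.
by have -> : [set _ : Om | P] = set0 by apply/seteqP; split.
Qed.

Definition sgf (R : realType) (k : nat) (y : Om) : R := if y k then 1 else -1.

Lemma Linfty_sgf (R : realType) k : Linfty_fun (sgf R k).
Proof.
split; last by exists 1 => x; rewrite /sgf; case: (x k); rewrite ?normrN normr1.
move=> _ B mB; rewrite setTI.
have -> : sgf R k @^-1` B =
  ([set y : Om | y k = true] `&` [set _ : Om | B 1]) `|`
  ([set y : Om | y k = false] `&` [set _ : Om | B (-1)]).
  apply/seteqP; split => y; rewrite /sgf /=.
    by case: (y k) => h; [left|right].
  by move=> [[-> ?]|[-> ?]].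
by apply: measurableU; apply: measurableI => //; [exact: mcoord|exact: mconst|exact: mcoord|exact: mconst].
Qed.

Unset Implicit Arguments.

Theorem theorem1p7 (R : realType) (a b : nat -> int)
  (ha_inj : {in [pred n : nat | (0 < n)%N] &, injective a})
  (hb_inj : {in [pred n : nat | (0 < n)%N] &, injective b})
  (ha0 : forall n : nat, (0 < n)%N -> a n != 0)
  (hb0 : forall n : nat, (0 < n)%N -> b n != 0) :
  exists (d : measure_display) (X : measurableType d)
         (mu : probability X R) (T Tinv S Sinv : X -> X),
    [/\ invertible_mpt mu T Tinv, invertible_mpt mu S Sinv,
        is_bernoulli mu T /\ is_bernoulli mu S,
        (exists f g : X -> R, Linfty_fun f /\ Linfty_fun g /\
           ~ cvgn (fun N : nat =>
               N%:R^-1 * \sum_(1 <= n < N.+1)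
                 fine (\int[mu]_x (f (iterz T Tinv (a n) x)
                                   * g (iterz S Sinv (b n) x))%:E)))
      & exists A : set X, measurable A /\ (0 < mu A)%E /\
          forall n : nat, (0 < n)%N ->
            mu (iterz T Tinv (a n) @^-1` A `&` iterz S Sinv (b n) @^-1` A) = 0%E].
Proof.
exists _, Om, (mu R), Tm, Tmi, (Sm a b), (Smi a b); split.
- exact: inv_T.
- exact: inv_S.
- by split; [exact: bern_T|exact: bern_S].
- exists (sgf R (enc 0 0)), (sgf R (enc 0 1)); split; first exact: Linfty_sgf.
  split; first exact: Linfty_sgf.
  suff -> : (fun N : nat => N%:R^-1 * \sum_(1 <= n < N.+1)
                 fine (\int[mu R]_x (sgf R (enc 0 0) (iterz Tm Tmi (a n) x)
                                   * sgf R (enc 0 1) (iterz (Sm a b) (Smi a b) (b n) x))%:E))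
      = uu R by exact: not_cvg_uu.
  apply/funext => N; rewrite /uu /Ssum; congr (_ * _).
  apply: eq_big_nat => n /andP[n1 _].
  rewrite (eq_integral (cst (sg R n)%:E)); last first.
    move=> x _; rewrite /sgf T_coord // (S_coord1 ha_inj hb_inj hb0) //= /sg.
    by case: (x _); case: (eps _); rewrite /= ?mulr1 ?mul1r ?mulrN1 ?opprK.
  rewrite integral_cst //.
  rewrite (_ : _ [set: _] = 1%E) ?mule1 //.
  exact: (probability_setT (mu R)).
- exists (CylL [:: (enc 0 2, false); (enc 0 3, false)]); split; first exact: mCylL.
  have hA : mu R (CylL [:: (enc 0 2, false); (enc 0 3, false)]) = ((2 ^+ 2)^-1 : R)%:E.
    by exact: mu_cyl.
  split.
    change (0 < mu R (CylL [:: (enc 0 2, false); (enc 0 3, false)]))%E.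
    by rewrite hA lte_fin invr_gt0 exprn_gt0.
  move=> n n0.
  have -> : iterz Tm Tmi (a n) @^-1` CylL [:: (enc 0 2, false); (enc 0 3, false)]
      `&` iterz (Sm a b) (Smi a b) (b n) @^-1` CylL [:: (enc 0 2, false); (enc 0 3, false)]
      = set0.
    apply/seteqP; split => // x [] /=; rewrite /CylL /=.
    rewrite T_coord // (S_coord3 ha_inj hb_inj hb0) //.
    by move=> /andP[/eqP -> _] /andP[_ /andP[]].
  exact: measure0.
Qed.
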